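(* Let $\mathcal{U}$ be a UFO tree of a tree $F$ (arbitrary degree). For any level $l>0$ of $\mathcal{U}$, the number of level-$l$ clusters is at most $5/6$ times the number of level-$(l-1)$ clusters.
   Context: UFO trees. For a tree $F$ with vertex set $V$: level-$0$ clusters are singletons; level-$i$ clusters partition $V$ into connected pieces; two are adjacent if an edge of $F$ joins them; the degree of a cluster is the number of edges of $F$ with exactly one endpoint in it, and it is high degree if this is at least $3$. Level $i+1$ arises by merging pairwise disjoint groups of level-$i$ clusters, each group being two adjacent clusters of degrees $\{1,1\}$, $\{1,2\}$ or $\{2,2\}$, or a high-degree cluster together with one or more adjacent degree-$1$ clusters, chosen maximally (each high-degree cluster is grouped with all its adjacent degree-$1$ clusters, and the remaining degree-$\le 2$ clusters are paired by a maximal matching of allowed pairs); ungrouped clusters persist. Levels are formed until $F$ is a single cluster (so level $l$ exists only if level $l-1$ has at least two clusters). *)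

(* Defs.v *)
From mathcomp Require Import all_boot.
Set Implicit Arguments. Unset Strict Implicit. Unset Printing Implicit Defensive.

Section UFO.
Variables (T : finType) (e : rel T).

Definition is_tree : Prop :=
  symmetric e /\ irreflexive e /\ (forall x y, connect e x y) /\
  (forall (x : T) (p : seq T), path e x p -> uniq (x :: p) -> 2 <= size p ->
     ~~ e (last x p) x).

Definition cluster_connected (C : {set T}) : Prop :=
  forall x y, x \in C -> y \in C ->
    connect [rel u v | e u v && (u \in C) && (v \in C)] x y.

Definition clustering (P : {set {set T}}) : Prop :=
  partition P [set: T] /\ forall C, C \in P -> cluster_connected C.

(* number of edges of F with exactly one endpoint in C
   (each undirected edge counted once, oriented from inside to outside) *)
Definition cdeg (C : {set T}) : nat :=
  #|[set p : T * T | e p.1 p.2 && (p.1 \in C) && (p.2 \notin C)]|.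

Definition cadj (A B : {set T}) : bool :=
  [exists x in A, exists y in B, e x y].

Definition valid_group (g : {set {set T}}) : Prop :=
  #|g| = 1 \/
  (exists A B, g = [set A; B] /\ A != B /\ cadj A B /\
     1 <= cdeg A <= 2 /\ 1 <= cdeg B <= 2) \/
  (exists c, c \in g /\ 3 <= cdeg c /\ 2 <= #|g| /\
     forall d, d \in g -> d != c -> cdeg d = 1 /\ cadj c d).

Definition ufo_step (P Q : {set {set T}}) : Prop :=
  exists G : {set {set {set T}}},
    partition G P /\
    (forall g, g \in G -> valid_group g) /\
    (forall c d, c \in P -> d \in P -> 3 <= cdeg c -> cdeg d = 1 -> cadj c d ->
       pblock G c = pblock G d) /\
    (* the pairing of the remaining degree <= 2 clusters is a maximal matching *)
    (forall A B, A \in P -> B \in P -> A != B -> cadj A B ->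
       1 <= cdeg A <= 2 -> 1 <= cdeg B <= 2 ->
       pblock G A = [set A] -> pblock G B = [set B] -> False) /\
    Q = [set cover g | g in G].

Definition ufo_tree (h : nat) (L : nat -> {set {set T}}) : Prop :=
  L 0 = [set [set x] | x : T] /\
  #|L h| = 1 /\
  (forall i, i <= h -> clustering (L i)) /\
  (forall i, i < h -> 2 <= #|L i| /\ ufo_step (L i) (L i.+1)).

End UFO.

(* Main.v *)
Require Import Defs.
From mathcomp Require Import all_boot.
From mathcomp Require Import zify.
Set Implicit Arguments. Unset Strict Implicit. Unset Printing Implicit Defensive.

Lemma disjP (T : finType) (A B : {set T}) :
  (forall z, z \in A -> z \in B -> False) -> [disjoint A & B].
Proof.
move=> H; rewrite disjoints_subset; apply/subsetP => z zA; rewrite inE.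
by apply/negP => /(H z zA).
Qed.

Section Cross.
Variables (T : finType) (e : rel T).
Hypothesis esym : symmetric e.
Hypothesis eacyc : forall (x : T) (p : seq T), path e x p -> uniq (x :: p) ->
  2 <= size p -> ~~ e (last x p) x.
Hypothesis econn : forall x y, connect e x y.

Lemma path_in (C : {set T}) x p :
  path [rel u v | e u v && (u \in C) && (v \in C)] x p -> {subset p <= C}.
Proof.
elim: p x => [|y p IH] x //= /andP[/andP[/andP[_ _] yC] pp] z.
rewrite inE => /orP[/eqP->//|]; exact: IH pp z.
Qed.

Lemma simple_path_in (C : {set T}) x y : cluster_connected e C -> x \in C -> y \in C ->
  exists p, [/\ path e x p, uniq (x :: p), last x p = y & {subset x :: p <= C}].
Proof.
move=> H xC yC; have /connectP[p pp ->] := H x y xC yC.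
case: (shortenP pp) => p' pp' up' sub; exists p'; split => //.
- by apply: sub_path pp' => u v /= /andP[/andP[]].
- move=> z; rewrite inE => /orP[/eqP->//|]; exact: path_in pp' z.
Qed.

Lemma two_edges (A B : {set T}) a1 a2 b1 b2 :
  cluster_connected e A -> cluster_connected e B -> [disjoint A & B] ->
  a1 \in A -> a2 \in A -> b1 \in B -> b2 \in B -> e a1 b1 -> e a2 b2 ->
  a1 = a2 /\ b1 = b2.
Proof.
move=> cA cB dAB a1A a2A b1B b2B e11 e22.
have [p [pp up lp sp]] := simple_path_in cA a1A a2A.
have [q [pq uq lq sq]] := simple_path_in cB b2B b1B.
case: (leqP 2 (size (p ++ b2 :: q))) => Hs.
  have : ~~ e (last a1 (p ++ b2 :: q)) a1.
    apply: eacyc => //.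
      by rewrite cat_path pp /= lp e22 pq.
    rewrite -cat_cons cat_uniq up uq andbT; apply/hasPn => z zq.
    apply/negP => zp; have zA := sp z zp; have zB := sq z zq.
    by move: dAB; rewrite disjoints_subset => /subsetP /(_ z zA); rewrite inE zB.
  by rewrite last_cat /= lq esym e11.
move: Hs; rewrite size_cat /=; case: p pp up lp sp => [|? ?] /=; last by move=> _ _ _ _; lia.
move=> _ _ <- _; case: q pq uq lq sq => [|? ?] //= _ _ <- _ _; by [].
Qed.

Variable K : finType.
Definition fib (f : T -> K) k := [set z | f z == k].
Definition fconn (f : T -> K) := forall k, cluster_connected e (fib f k).
Definition crossing (f : T -> K) := [set p : T * T | e p.1 p.2 && (f p.1 != f p.2)].

Lemma path_diff (f : T -> K) x p : path e x p -> f x != f (last x p) ->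
  exists a b, e a b /\ f a != f b.
Proof.
elim: p x => [|y p IH] x /=; first by rewrite eqxx.
case/andP => exy py; case: (eqVneq (f x) (f y)) => [fxy|fxy] H.
  by apply: IH py _; rewrite -fxy.
by exists x, y.
Qed.

Lemma cc_sub (C C' : {set T}) x y : cluster_connected e C -> C \subset C' ->
  x \in C -> y \in C -> connect [rel u v | e u v && (u \in C') && (v \in C')] x y.
Proof.
move=> H /subsetP sub xC yC; apply: connect_sub (H x y xC yC) => u v /= /andP[/andP[euv uC] vC].
by apply: connect1; rewrite /= euv !sub.
Qed.

Lemma cross_bound n : forall f : T -> K, #|f @: [set: T]| = n -> fconn f ->
  #|crossing f| <= 2 * n - 2.
Proof.
elim: n => [|n IH] f Hn Hf.
  suff -> : crossing f = set0 by rewrite cards0.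
  apply/setP => p; rewrite !inE; apply/negbTE/negP => /andP[_].
  move/eqP: Hn; rewrite cards_eq0 => /eqP H.
  by have := imset_f f (in_setT p.1); rewrite H inE.
case: (leqP n 0) => Hn0.
  suff -> : crossing f = set0 by rewrite cards0.
  apply/setP => p; rewrite !inE; apply/negbTE/negP => /andP[_] /negP; apply.
  have : #|f @: [set: T]| <= 1 by rewrite Hn; lia.
  move/card_le1_eqP => H; apply/eqP; apply: H; exact: imset_f.
have [k1 [k2 [/imsetP[x _ ->] /imsetP[y _ ->] fxy]]] : exists k1 k2,
   [/\ k1 \in f @: [set: T], k2 \in f @: [set: T] & k1 != k2].
  by apply/card_gt1P; rewrite Hn; lia.
have /connectP[p pp lp] := econn x y.
have [a [b [eab fab]]] : exists a b, e a b /\ f a != f b.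
  by apply: (path_diff pp); rewrite -lp.
pose f' z := if f z == f b then f a else f z.
have Himg : f' @: [set: T] = (f @: [set: T]) :\ f b.
  apply/setP => k; rewrite !inE; apply/imsetP/andP => [[z _ ->]|[kb /imsetP[z _ kz]]]; last subst k.
    rewrite /f'; case: ifP => H; first by rewrite fab imset_f.
    by rewrite H imset_f.
  by exists z => //; rewrite /f'; case: ifP => // /eqP H; rewrite H eqxx in kb.
have Hn' : #|f' @: [set: T]| = n.
  have := cardsD1 (f b) (f @: [set: T]); rewrite imset_f // -Himg Hn; lia.
have Hf' : fconn f'.
  clear x y fxy pp lp; move=> k x y; rewrite !inE => /eqP xk /eqP yk.
  case: (eqVneq k (f a)) => [ka|ka].
    rewrite {k}ka in xk yk *.
    have subA : fib f (f a) \subset fib f' (f a).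
      by apply/subsetP => z; rewrite !inE /f' => /eqP ->; rewrite (negbTE fab).
    have subB : fib f (f b) \subset fib f' (f a).
      by apply/subsetP => z; rewrite !inE /f' => /eqP ->; rewrite eqxx.
    have aA : a \in fib f (f a) by rewrite inE.
    have bB : b \in fib f (f b) by rewrite inE.
    have eba : connect [rel u v | e u v && (u \in fib f' (f a)) && (v \in fib f' (f a))] b a.
      by apply: connect1; rewrite /= esym eab !inE /f' eqxx (negbTE fab) eqxx.
    have eab' : connect [rel u v | e u v && (u \in fib f' (f a)) && (v \in fib f' (f a))] a b.
      by apply: connect1; rewrite /= eab !inE /f' eqxx (negbTE fab) eqxx.
    have H1 z : f' z = f a -> (f z = f a \/ f z = f b).
      rewrite /f'; case: ifP => [/eqP|]; by auto.
    apply: (@connect_trans _ _ a).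
      case: (H1 x xk) => Hx.
        by apply: cc_sub (Hf (f a)) subA _ aA; rewrite inE Hx.
      apply: connect_trans eba.
      by apply: cc_sub (Hf (f b)) subB _ bB; rewrite inE Hx.
    case: (H1 y yk) => Hy.
      by apply: cc_sub (Hf (f a)) subA aA _; rewrite inE Hy.
    apply: connect_trans eab' _.
    by apply: cc_sub (Hf (f b)) subB bB _; rewrite inE Hy.
  have H1 z : f' z = k -> f z = k.
    by rewrite /f'; case: ifP => // _ H; rewrite H eqxx in ka.
  have kb : k != f b.
    apply: contraNneq ka => kb; move: xk; rewrite /f'.
    by case: ifP => [_ ->//|]; rewrite -kb => /negbT /eqP.
  apply: cc_sub (Hf k) _ _ _; rewrite ?inE ?H1 //.
  apply/subsetP => z; rewrite !inE /f' => /eqP zk; case: ifP => [/eqP zb|_].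
    by rewrite -zk zb eqxx in kb.
  by rewrite zk.
have dAB : [disjoint fib f (f a) & fib f (f b)].
  apply/disjP => z; rewrite !inE => /eqP -> /eqP H; by rewrite H eqxx in fab.
have Hsub : crossing f \subset crossing f' :|: [set (a,b); (b,a)].
  apply/subsetP => [[u v]]; rewrite !inE /= => /andP[euv fuv].
  case: (eqVneq (f' u) (f' v)) => [Huv|Huv]; last by rewrite euv.
  apply/orP; right; move: Huv; rewrite /f'.
  case: ifP => [/eqP ub|ub]; case: ifP => [/eqP vb|vb].
  - by rewrite ub vb eqxx in fuv.
  - move=> va; have [] := two_edges (Hf _) (Hf _) dAB (a1:=a) (a2:=v) (b1:=b) (b2:=u).
    all: rewrite ?inE ?ub ?va ?eqxx //; try by rewrite esym.
    by move=> -> ->; rewrite eqxx orbT.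
  - move=> ua; have [] := two_edges (Hf _) (Hf _) dAB (a1:=a) (a2:=u) (b1:=b) (b2:=v).
    all: rewrite ?inE ?vb ?ua ?eqxx //.
    by move=> -> ->; rewrite eqxx.
  - by move=> H; rewrite H eqxx in fuv.
have := subset_leq_card Hsub; rewrite cardsU.
have := IH f' Hn' Hf'; have : #|[set (a, b); (b, a)]| <= 2 by rewrite cards2; case: (_ != _).
lia.
Qed.
End Cross.


Lemma cardU_disj (T : finType) (A B : {set T}) : [disjoint A & B] -> #|A :|: B| = #|A| + #|B|.
Proof. by move=> d; rewrite cardsU disjoint_setI0 // cards0 subn0. Qed.

Lemma cardU_le (T : finType) (A B : {set T}) : #|A :|: B| <= #|A| + #|B|.
Proof. by rewrite cardsU leq_subr. Qed.

Lemma nx1 n : 1 <= n <= 2 -> 3 <= n -> False. Proof. lia. Qed.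
Lemma nx2 n : 0 < n -> n < 2 -> n = 1. Proof. lia. Qed.
Lemma nx3 n : 0 < n -> [|| 3 <= n, n == 2 | n == 1]. Proof. lia. Qed.
Lemma nx4 n : 0 < n -> [|| n == 1, n == 2 | 3 <= n]. Proof. lia. Qed.
Lemma nx5 a b c x y : c <= a + b -> a <= 1 * x -> b <= 2 * y -> c + x <= 2 * (x + y). Proof. lia. Qed.

Lemma arith n G sG p h s q HH a Hs U Lu Lf Lm Tw Hi EPP ELfP ETwP EHiP EUP EUHi EUPr EPrPr EPrP ELuPr ELAHi :
  s + q + HH + a <= n ->
  s <= Hs + U + Lu -> Hs + HH <= Hi -> Lf <= Lu + Lm + a -> n <= Lf + Tw + Hi ->
  EPP <= 2*n - 2 -> ELfP + ETwP + EHiP <= EPP -> Lf <= ELfP -> 2*Tw <= ETwP -> 3*Hi <= EHiP ->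
  2*U <= EUP -> EUP <= EUHi + EUPr ->
  EPrPr + EUPr + ELuPr <= EPrP -> q <= EPrPr -> EPrP + Lm <= 2*q -> Lu <= ELuPr ->
  EUHi + ELAHi <= EHiP -> a <= ELAHi -> (Hi = 0 -> EUHi = 0) -> (0 < Hi -> Lm + Lu <= p) ->
  2 <= n -> G <= sG + p + h -> sG <= s -> 2*p <= q -> h <= HH ->
  6 * G <= 5 * n.
Proof. intros; destruct Hi; lia. Qed.

Section Main.
Variables (T : finType) (e : rel T).
Hypothesis esym : symmetric e.
Hypothesis eacyc : forall (x : T) (p : seq T), path e x p -> uniq (x :: p) ->
  2 <= size p -> ~~ e (last x p) x.
Hypothesis econn : forall x y, connect e x y.
Variable P : {set {set T}}.
Hypothesis Ppart : partition P [set: T].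
Hypothesis Pconn : forall C, C \in P -> cluster_connected e C.
Hypothesis P2 : 2 <= #|P|.

Let Ptriv : trivIset P. Proof. by case/and3P: Ppart. Qed.
Let Pcov : cover P = [set: T]. Proof. by case/and3P: Ppart => /eqP. Qed.
Let P0 : set0 \notin P. Proof. by case/and3P: Ppart. Qed.

Definition blk x := pblock P x.
Local Notation deg := (cdeg e).
Definition out (C : {set T}) := [set p : T * T | e p.1 p.2 && (p.1 \in C) && (p.2 \notin C)].
Definition nb C := [set blk p.2 | p in out C].
Definition E (X Y : {set {set T}}) :=
  #|[set p : T * T | e p.1 p.2 && (blk p.1 \in X) && (blk p.2 \in Y) && (blk p.1 != blk p.2)]|.

Implicit Types (X Y S : {set {set T}}) (C D : {set T}).

Lemma blkP x : blk x \in P. Proof. by apply: pblock_mem; rewrite Pcov inE. Qed.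
Lemma blk_mem x : x \in blk x. Proof. by rewrite mem_pblock Pcov inE. Qed.
Lemma blk_def C x : C \in P -> x \in C -> blk x = C. Proof. exact: def_pblock. Qed.
Lemma blk_eq x y : (blk x == blk y) = (y \in blk x).
Proof. by rewrite eq_pblock // Pcov inE. Qed.
Lemma P_ne C : C \in P -> exists x, x \in C.
Proof.
move=> CP; have : C != set0 by apply: contraNneq P0 => <-.
by case/set0Pn => x; exists x.
Qed.

Lemma degE C : deg C = #|out C|. Proof. by []. Qed.

Lemma nb_edge x y : e x y -> blk x != blk y -> blk y \in nb (blk x).
Proof.
move=> exy bxy; apply/imsetP; exists (x, y) => //.
by rewrite inE /= exy blk_mem -blk_eq bxy.
Qed.

Lemma nb_inv C D : C \in P -> D \in nb C ->
  [/\ D \in P, D != C & exists x y, [/\ e x y, blk x = C & blk y = D]].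
Proof.
move=> CP /imsetP[[x y]]; rewrite inE /= => /andP[/andP[exy xC] yC] ->.
split; first exact: blkP.
  by apply: contraNneq yC => <-; exact: blk_mem.
by exists x, y; split => //; apply: blk_def.
Qed.

Lemma nb_cadj C D : C \in P -> D \in P -> D != C -> cadj e C D -> D \in nb C.
Proof.
move=> CP DP DC /existsP[x /andP[xC /existsP[y /andP[yD exy]]]].
rewrite -(blk_def CP xC) -(blk_def DP yD); apply: nb_edge => //.
by rewrite (blk_def CP xC) (blk_def DP yD) eq_sym.
Qed.

Lemma cadj_sym C D : cadj e C D = cadj e D C.
Proof.
apply/existsP/existsP => -[x /andP[xC /existsP[y /andP[yD exy]]]];
  by exists y; rewrite yD /=; apply/existsP; exists x; rewrite xC esym.
Qed.

Lemma nb_cadj_inv C D : C \in P -> D \in nb C -> cadj e C D.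
Proof.
move=> CP /(nb_inv CP) [DP _ [x [y [exy <- <-]]]].
by apply/existsP; exists x; rewrite blk_mem /=; apply/existsP; exists y; rewrite blk_mem.
Qed.

Lemma nb_sym C D : C \in P -> D \in nb C -> C \in nb D.
Proof.
move=> CP H; have [DP DC _] := nb_inv CP H.
by apply: nb_cadj => //; [rewrite eq_sym | rewrite cadj_sym; apply: nb_cadj_inv].
Qed.

Lemma nb_card C : #|nb C| <= deg C. Proof. exact: leq_imset_card. Qed.

Lemma closure (S : {set {set T}}) C0 : S \subset P -> C0 \in S ->
  (forall C, C \in S -> nb C \subset S) -> P \subset S.
Proof.
move=> SP C0S Hcl; have [x0 x0C] := P_ne (subsetP SP _ C0S).
have Hy y : blk y \in S.
  have /connectP[p pp ->] := econn x0 y.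
  have : blk x0 \in S by rewrite (blk_def (subsetP SP _ C0S) x0C).
  elim: p x0 pp {x0C} => [|z p IH] x //= /andP[exz pz] bx; apply: IH pz _.
  case: (eqVneq (blk x) (blk z)) => [<-|ne] //.
  exact: (subsetP (Hcl _ bx)) _ (nb_edge exz ne).
apply/subsetP => C CP; have [x xC] := P_ne CP.
by rewrite -(blk_def CP xC).
Qed.

Lemma deg_pos C : C \in P -> 1 <= deg C.
Proof.
move=> CP; rewrite lt0n; apply/negP => /eqP d0.
have Hnb : nb C = set0 by apply/eqP; rewrite -cards_eq0 -leqn0 -d0 nb_card.
have : P \subset [set C].
  apply: (closure (C0:=C)); rewrite ?inE //; first by rewrite sub1set.
  by move=> D; rewrite inE => /eqP ->; rewrite Hnb sub0set.
by move/subset_leq_card; rewrite cards1 leqNgt P2.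
Qed.


Definition SE (X Y : {set {set T}}) :=
  [set p : T * T | e p.1 p.2 && (blk p.1 \in X) && (blk p.2 \in Y) && (blk p.1 != blk p.2)].
Lemma EE X Y : E X Y = #|SE X Y|. Proof. by []. Qed.

Lemma E_sym X Y : E X Y = E Y X.
Proof.
suff H A B : E A B <= E B A by apply/eqP; rewrite eqn_leq !H.
have inj : injective (fun p : T * T => (p.2, p.1)) by move=> [? ?] [? ?] [-> ->].
rewrite !EE -(card_imset (SE A B) inj).
apply: subset_leq_card; apply/subsetP => _ /imsetP[[u v] + ->].
by rewrite !inE /= esym eq_sym => /andP[/andP[/andP[-> ->] ->] ->].
Qed.

Lemma E_monoR X (Y Y' : {set {set T}}) : Y \subset Y' -> E X Y <= E X Y'.
Proof.
move=> /subsetP sub; apply: subset_leq_card; apply/subsetP => p.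
by rewrite !inE => /andP[/andP[/andP[-> ->] /sub ->] ->].
Qed.

Lemma E_monoL (X X' : {set {set T}}) Y : X \subset X' -> E X Y <= E X' Y.
Proof. by move=> H; rewrite E_sym (E_sym X'); apply: E_monoR. Qed.

Lemma SE_U X Y1 Y2 : SE X (Y1 :|: Y2) = SE X Y1 :|: SE X Y2.
Proof.
apply/setP => p; rewrite !inE.
by case: (e _ _); case: (blk p.1 \in X); case: (blk p.2 \in Y1); case: (blk p.2 \in Y2);
  case: (blk p.1 != blk p.2).
Qed.

Lemma E_UR X Y1 Y2 : E X (Y1 :|: Y2) <= E X Y1 + E X Y2.
Proof. by rewrite !EE SE_U cardsU leq_subr. Qed.

Lemma E_disjR X Y1 Y2 : [disjoint Y1 & Y2] -> E X Y1 + E X Y2 <= E X (Y1 :|: Y2).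
Proof.
move=> d; rewrite !EE SE_U cardU_disj //; apply/disjP => p; rewrite !inE.
move=> /andP[/andP[_ H1] _] /andP[/andP[_ H2] _].
by move: d; rewrite disjoints_subset => /subsetP /(_ _ H1); rewrite inE H2.
Qed.

Lemma E_UL X1 X2 Y : E (X1 :|: X2) Y <= E X1 Y + E X2 Y.
Proof. by rewrite !(E_sym _ Y) E_UR. Qed.

Lemma E_disjL X1 X2 Y : [disjoint X1 & X2] -> E X1 Y + E X2 Y <= E (X1 :|: X2) Y.
Proof. by move=> d; rewrite !(E_sym _ Y) E_disjR. Qed.

Lemma E0 X : E X set0 = 0.
Proof.
apply/eqP; rewrite cards_eq0; apply/eqP/setP => p; rewrite !inE.
by case: (e _ _); case: (_ \in X).
Qed.

Lemma E_inj (X Y : {set {set T}}) : X \subset P -> (forall C, C \in X -> exists2 D, D \in nb C & D \in Y) ->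
  #|X| <= E X Y.
Proof.
move=> /subsetP XP H; rewrite EE.
apply: leq_trans (leq_imset_card (fun p : T * T => blk p.1) _); apply: subset_leq_card.
apply/subsetP => C CX; have [D DC DY] := H C CX.
have [_ DC' [x [y [exy bx by']]]] := nb_inv (XP _ CX) DC.
apply/imsetP; exists (x, y) => //.
by rewrite !inE /= exy bx by' CX DY eq_sym DC'.
Qed.

Lemma E_nb X Y : (forall C, C \in X -> nb C \subset Y) -> E X P <= E X Y.
Proof.
move=> H; apply: subset_leq_card; apply/subsetP => p.
rewrite !inE => /andP[/andP[/andP[ep pX] _] ne]; rewrite ep pX ne /= andbT.
exact: (subsetP (H _ pX)) _ (nb_edge ep ne).
Qed.

Lemma E_deg X : X \subset P -> E X P = \sum_(C in X) deg C.
Proof.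
move=> /subsetP XP; rewrite EE -sum1_card; symmetry.
rewrite (eq_bigr (fun C => \sum_(p in out C) 1)) => [|C _]; last by rewrite sum1_card.
rewrite (exchange_big_dep (fun p => p \in SE X P)) /=.
  apply: eq_bigr => p pS; rewrite (big_pred1 (blk p.1)) // => C.
  move: pS; rewrite !inE => /andP[/andP[/andP[ep bX] _] ne].
  apply/andP/eqP => [[CX /andP[/andP[_ p1C] _]]|->]; first by rewrite (blk_def (XP _ CX) p1C).
  by rewrite bX ep blk_mem -blk_eq ne.
move=> C p CX; rewrite !inE => /andP[/andP[ep p1C] p2C].
rewrite ep blkP blk_eq (blk_def (XP _ CX) p1C) CX p2C. by [].
Qed.

Lemma E_ge k X : X \subset P -> (forall C, C \in X -> k <= deg C) -> k * #|X| <= E X P.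
Proof.
move=> XP H; rewrite E_deg // mulnC -sum_nat_const; exact: leq_sum.
Qed.

Lemma E_le k X : X \subset P -> (forall C, C \in X -> deg C <= k) -> E X P <= k * #|X|.
Proof.
move=> XP H; rewrite E_deg // mulnC -sum_nat_const; exact: leq_sum.
Qed.

Lemma blk_img : blk @: [set: T] = P.
Proof.
apply/setP => C; apply/imsetP/idP => [[x _ ->]|CP]; first exact: blkP.
by have [x xC] := P_ne CP; exists x => //; rewrite (blk_def CP xC).
Qed.

Lemma EPP : E P P <= 2 * #|P| - 2.
Proof.
have -> : E P P = #|crossing e blk|.
  rewrite EE; apply: eq_card => p; rewrite !inE !blkP.
  by case: (e _ _).
apply: cross_bound => //; first by rewrite blk_img.
move=> k x y; rewrite !inE => /eqP xk /eqP yk.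
have -> : fib blk k = blk x.
  apply/setP => z; rewrite inE -xk; apply/eqP/idP => [<-|zx]; first exact: blk_mem.
  exact: blk_def (blkP x) zx.
apply: Pconn; [apply: blkP | apply: blk_mem | ].
by rewrite xk -yk blk_mem.
Qed.


Variable G : {set {set {set T}}}.
Hypothesis Gpart : partition G P.
Hypothesis Gvalid : forall g, g \in G -> valid_group e g.
Hypothesis Gabs : forall c d, c \in P -> d \in P -> 3 <= cdeg e c -> cdeg e d = 1 ->
  cadj e c d -> pblock G c = pblock G d.
Hypothesis Gmax : forall A B, A \in P -> B \in P -> A != B -> cadj e A B ->
  1 <= cdeg e A <= 2 -> 1 <= cdeg e B <= 2 -> pblock G A = [set A] -> pblock G B = [set B] -> False.

Let Gtriv : trivIset G. Proof. by case/and3P: Gpart. Qed.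
Let Gcov : cover G = P. Proof. by case/and3P: Gpart => /eqP. Qed.
Let G0 : set0 \notin G. Proof. by case/and3P: Gpart. Qed.

Definition grp C := pblock G C.
Definition isHigh (g : {set {set T}}) := [exists D in g, 3 <= deg D].
Definition Sg := [set C in P | #|grp C| == 1].
Definition PrC := [set C in P | (#|grp C| != 1) && ~~ isHigh (grp C)].
Definition HC := [set C in P | (#|grp C| != 1) && isHigh (grp C)].
Definition SG := [set g in G | #|g| == 1].
Definition PG := [set g in G | (#|g| != 1) && ~~ isHigh g].
Definition HG := [set g in G | (#|g| != 1) && isHigh g].
Definition Hi := [set C in P | 3 <= deg C].
Definition Lf := [set C in P | deg C == 1].
Definition Tw := [set C in P | deg C == 2].

Lemma grpG C : C \in P -> grp C \in G. Proof. by move=> CP; apply: pblock_mem; rewrite Gcov. Qed.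
Lemma grp_mem C : C \in P -> C \in grp C. Proof. by move=> CP; rewrite mem_pblock Gcov. Qed.
Lemma grp_def g C : g \in G -> C \in g -> grp C = g. Proof. exact: def_pblock. Qed.
Lemma G_sub g C : g \in G -> C \in g -> C \in P.
Proof. by move=> gG Cg; rewrite -Gcov; apply/bigcupP; exists g. Qed.

Lemma sg_eq C : C \in Sg -> grp C = [set C].
Proof.
rewrite inE => /andP[CP /cards1P[x gx]]; have := grp_mem CP.
by rewrite gx inE => /eqP ->.
Qed.

Lemma pr_facts C : C \in PrC ->
  [/\ 1 <= deg C <= 2 & exists2 D, D \in PrC & (D != C) && cadj e C D].
Proof.
rewrite inE => /andP[CP /andP[n1 nh]]; have gG := grpG CP.
have Cg := grp_mem CP.
have inPr D : D \in grp C -> D \in PrC.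
  by move=> Dg; rewrite inE (G_sub gG Dg) (grp_def gG Dg) n1 nh.
case: (Gvalid gG) => [/eqP|[[A [B [gAB [AB [cAB [dA dB]]]]]]|[c [cg [dc _]]]]].
- by rewrite (negbTE n1).
- move: (Cg); rewrite gAB !inE => /orP[]/eqP CA.
    split; first by rewrite CA.
    by exists B; [apply: inPr; rewrite gAB !inE eqxx orbT | rewrite CA eq_sym AB].
  split; first by rewrite CA.
  by exists A; [apply: inPr; rewrite gAB !inE eqxx | rewrite CA AB cadj_sym].
- by move: nh; rewrite /isHigh negb_exists => /forallP /(_ c); rewrite cg /= dc.
Qed.

Lemma hc_facts C : C \in HC ->
  3 <= deg C \/ (deg C = 1 /\ exists2 c, c \in Hi & (c != C) && cadj e c C).
Proof.
rewrite inE => /andP[CP /andP[n1 hi]]; have gG := grpG CP.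
have Cg := grp_mem CP.
case: (Gvalid gG) => [/eqP|[[A [B [gAB [AB [cAB [dA dB]]]]]]|[c [cg [dc [_ H]]]]]].
- by rewrite (negbTE n1).
- exfalso; case/existsP: hi => D /andP[]; rewrite gAB !inE => /orP[]/eqP ->; [exact: nx1 dA | exact: nx1 dB].
- case: (eqVneq C c) => [->|Cc]; first by left.
  have [d1 adj] := H C Cg Cc; right; split => //.
  by exists c; [rewrite inE (G_sub gG cg) dc | rewrite eq_sym Cc adj].
Qed.

Lemma nb_ne C : C \in P -> exists D, D \in nb C.
Proof.
move=> CP; have := deg_pos CP; rewrite degE card_gt0 => /set0Pn[p pC].
by exists (blk p.2); apply: imset_f.
Qed.

Lemma two_nb C D1 D2 : D1 \in nb C -> D2 \in nb C -> D1 != D2 -> 2 <= deg C.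
Proof.
move=> H1 H2 D12; apply: leq_trans (nb_card C).
have : [set D1; D2] \subset nb C by rewrite subUset !sub1set H1 H2.
by move/subset_leq_card; rewrite cards2 D12.
Qed.

Lemma classify C D : C \in Sg -> deg C <= 2 -> D \in nb C ->
  D \in PrC \/ (D \in Hi /\ 2 <= deg C).
Proof.
move=> CS dC2 DnC; have CP : C \in P by move: CS; rewrite inE => /andP[].
have [DP DC _] := nb_inv CP DnC.
have cCD := nb_cadj_inv CP DnC; have CnD := nb_sym CP DnC.
have dC1 := deg_pos CP; have dD1 := deg_pos DP.
case: (leqP 3 (deg D)) => dD.
  right; split; first by rewrite inE DP dD.
  case: (leqP 2 (deg C)) => // dC; exfalso.
  have := Gabs DP CP dD (_ : deg C = 1) (_ : cadj e D C); rewrite -cadj_sym => /(_ _ cCD).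
  move=> /(_ (nx2 dC1 dC)); rewrite -/(grp D) -/(grp C) (sg_eq CS) => gD.
  by have := grp_mem DP; rewrite gD inE (negbTE DC).
case: (boolP (#|grp D| == 1)) => s1.
  exfalso; apply: (Gmax CP DP _ cCD _ _ (sg_eq CS) (sg_eq _)).
  - by rewrite eq_sym.
  - by rewrite dC1 dC2.
  - by rewrite dD1 -ltnS.
  - by rewrite inE DP s1.
case: (boolP (isHigh (grp D))) => hh; last by left; rewrite inE DP s1 hh.
have : D \in HC by rewrite inE DP s1 hh.
case/hc_facts => [|[d1 [c cHi /andP[cD cadj]]]]; first by rewrite leqNgt dD.
have cP : c \in P by move: cHi; rewrite inE => /andP[].
have cnD : c \in nb D by apply: nb_cadj => //; rewrite cadj_sym.
have cC : c != C.
  by apply: contraTneq cHi => ->; rewrite inE CP /= -ltnNge ltnS.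
by have := two_nb CnD cnD (_ : C != c); rewrite eq_sym cC d1 => /(_ isT).
Qed.


Lemma Sg_P : Sg \subset P. Proof. by apply/subsetP => C; rewrite inE => /andP[]. Qed.
Lemma PrC_P : PrC \subset P. Proof. by apply/subsetP => C; rewrite inE => /andP[]. Qed.
Lemma HC_P : HC \subset P. Proof. by apply/subsetP => C; rewrite inE => /andP[]. Qed.
Lemma Hi_P : Hi \subset P. Proof. by apply/subsetP => C; rewrite inE => /andP[]. Qed.
Lemma Lf_P : Lf \subset P. Proof. by apply/subsetP => C; rewrite inE => /andP[]. Qed.
Lemma Tw_P : Tw \subset P. Proof. by apply/subsetP => C; rewrite inE => /andP[]. Qed.

Ltac djt := let C := fresh "C" in apply/disjP => C; rewrite !inE;
  case: (C \in P); case: (#|grp C| == 1); case: (isHigh (grp C));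
  case: (deg C) => [|[|[|?]]] //=.

Lemma F1 : #|Sg| + #|PrC| + #|HC :&: Hi| + #|HC :&: Lf| <= #|P|.
Proof.
rewrite -!cardU_disj; try by djt.
apply: subset_leq_card; rewrite !subUset Sg_P PrC_P.
by rewrite !(subset_trans (subsetIl _ _) HC_P).
Qed.

Lemma F2 : #|Sg| <= #|Sg :&: Hi| + #|Sg :&: Tw| + #|Sg :&: Lf|.
Proof.
apply: leq_trans (_ : #|(Sg :&: Hi) :|: (Sg :&: Tw) :|: (Sg :&: Lf)| <= _).
  apply: subset_leq_card; apply/subsetP => C CS; have CP := subsetP Sg_P _ CS.
  move: CS (deg_pos CP); rewrite !inE; case: (C \in P); case: (#|grp C| == 1);
  by case: (deg C) => [|[|[|?]]].
by apply: leq_trans (cardU_le _ _) _; rewrite leq_add2r cardU_le.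
Qed.

Lemma F3 : #|Sg :&: Hi| + #|HC :&: Hi| <= #|Hi|.
Proof.
rewrite -cardU_disj; first by apply: subset_leq_card; rewrite subUset !subsetIr.
by djt.
Qed.

Lemma F4 : #|Lf| <= #|Sg :&: Lf| + #|PrC :&: Lf| + #|HC :&: Lf|.
Proof.
apply: leq_trans (_ : #|(Sg :&: Lf) :|: (PrC :&: Lf) :|: (HC :&: Lf)| <= _).
  apply: subset_leq_card; apply/subsetP => C CL; have CP := subsetP Lf_P _ CL.
  move: CL; rewrite !inE CP /=; case: (deg C == 1) => //=.
  by case: (_ == 1); case: (isHigh _).
by apply: leq_trans (cardU_le _ _) _; rewrite leq_add2r cardU_le.
Qed.

Lemma F5 : #|P| <= #|Lf| + #|Tw| + #|Hi|.
Proof.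
apply: leq_trans (_ : #|Lf :|: Tw :|: Hi| <= _).
  apply: subset_leq_card; apply/subsetP => C CP.
  move: (deg_pos CP); rewrite !inE CP; by case: (deg C) => [|[|[|?]]].
by apply: leq_trans (cardU_le _ _) _; rewrite leq_add2r cardU_le.
Qed.

Lemma F7 : E Lf P + E Tw P + E Hi P <= E P P.
Proof.
have d1 : [disjoint Lf & Tw] by djt.
have d2 : [disjoint Lf :|: Tw & Hi] by djt.
apply: leq_trans (_ : E (Lf :|: Tw) P + E Hi P <= _).
  by rewrite leq_add2r; apply: E_disjL d1.
apply: leq_trans (E_disjL _ d2) _; apply: E_monoL.
by rewrite !subUset Lf_P Tw_P Hi_P.
Qed.

Lemma F8 : [/\ #|Lf| <= E Lf P, 2 * #|Tw| <= E Tw P & 3 * #|Hi| <= E Hi P].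
Proof.
split.
- by rewrite -[#|Lf|]mul1n; apply: (E_ge Lf_P) => C; rewrite inE => /andP[_ /eqP ->].
- by apply: (E_ge Tw_P) => C; rewrite inE => /andP[_ /eqP ->].
- by apply: (E_ge Hi_P) => C; rewrite inE => /andP[].
Qed.

Lemma F9 : 2 * #|Sg :&: Tw| <= E (Sg :&: Tw) P /\
  E (Sg :&: Tw) P <= E (Sg :&: Tw) Hi + E (Sg :&: Tw) PrC.
Proof.
have UP : Sg :&: Tw \subset P by apply: subset_trans (subsetIl _ _) Sg_P.
split; first by apply: (E_ge UP) => C; rewrite !inE => /andP[_ /andP[_ /eqP ->]].
apply: leq_trans (E_UR _ _ _); apply: E_nb => C; move=> /setIP[CS /setIdP[CP /eqP d2]].
apply/subsetP => D DnC; rewrite inE.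
have dC : deg C <= 2 by rewrite d2.
by case: (classify CS dC DnC) => [->|[] ->]; rewrite ?orbT.
Qed.

Lemma F10 : E PrC PrC + E PrC (Sg :&: Tw) + E PrC (Sg :&: Lf) <= E PrC P.
Proof.
have d1 : [disjoint PrC & Sg :&: Tw] by djt.
have d2 : [disjoint PrC :|: (Sg :&: Tw) & Sg :&: Lf] by djt.
apply: leq_trans (_ : E PrC (PrC :|: (Sg :&: Tw)) + E PrC (Sg :&: Lf) <= _).
  by rewrite leq_add2r; apply: E_disjR d1.
apply: leq_trans (E_disjR _ d2) _; apply: E_monoR.
by rewrite !subUset PrC_P !(subset_trans (subsetIl _ _) Sg_P).
Qed.

Lemma F11 : #|PrC| <= E PrC PrC.
Proof.
apply: E_inj PrC_P _ => C CPr; have [_ [D DPr /andP[DC cCD]]] := pr_facts CPr.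
exists D => //; apply: nb_cadj => //; [exact: (subsetP PrC_P) | exact: (subsetP PrC_P)].
Qed.

Lemma F12 : E PrC P + #|PrC :&: Lf| <= 2 * #|PrC|.
Proof.
rewrite -(cardsID Lf PrC).
have sub1 : PrC :&: Lf \subset P by apply: subset_trans (subsetIl _ _) PrC_P.
have sub2 : PrC :\: Lf \subset P by apply: subset_trans (subsetDl _ _) PrC_P.
have H1 : E (PrC :&: Lf) P <= 1 * #|PrC :&: Lf|.
  by apply: (E_le sub1) => C; rewrite !inE => /andP[_ /andP[_ /eqP ->]].
have H2 : E (PrC :\: Lf) P <= 2 * #|PrC :\: Lf|.
  apply: (E_le sub2) => C /setDP[CPr _].
  by have [/andP[]] := pr_facts CPr.
have H3 : E PrC P <= E (PrC :&: Lf) P + E (PrC :\: Lf) P.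
  by rewrite -{1}(setID PrC Lf); apply: E_UL.
exact: nx5 H3 H1 H2.
Qed.

Lemma F13 : #|Sg :&: Lf| <= E (Sg :&: Lf) PrC.
Proof.
have LP : Sg :&: Lf \subset P by apply: subset_trans (subsetIl _ _) Sg_P.
apply: E_inj LP _ => C; move=> /setIP[CS /setIdP[CP /eqP d1]].
have [D DnC] := nb_ne CP; exists D => //.
have dC : deg C <= 2 by rewrite d1.
by case: (classify CS dC DnC) => [|[_]]; rewrite ?d1.
Qed.

Lemma F14 : E Hi (Sg :&: Tw) + E Hi (HC :&: Lf) <= E Hi P /\ #|HC :&: Lf| <= E (HC :&: Lf) Hi.
Proof.
split.
  apply: leq_trans (E_disjR _ _) _.
    by djt.
  by apply: E_monoR; rewrite subUset !(subset_trans (subsetIl _ _)) ?Sg_P ?HC_P.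
have LP : HC :&: Lf \subset P by apply: subset_trans (subsetIl _ _) HC_P.
apply: E_inj LP _ => C; move=> /setIP[CH /setIdP[CP /eqP d1]].
case: (hc_facts CH) => [|[_ [c cHi /andP[cC adj]]]]; first by rewrite d1.
exists c => //; apply: nb_cadj => //; first by move: cHi; rewrite inE => /andP[].
by rewrite cadj_sym.
Qed.

Lemma F15 : #|Hi| = 0 -> E (Sg :&: Tw) Hi = 0.
Proof. by move/eqP; rewrite cards_eq0 => /eqP ->; apply: E0. Qed.

Lemma FG1 : #|G| <= #|SG| + #|PG| + #|HG|.
Proof.
apply: leq_trans (_ : #|SG :|: PG :|: HG| <= _).
  apply: subset_leq_card; apply/subsetP => g gG; rewrite !inE gG /=.
  by case: (_ == 1); case: (isHigh _).
by apply: leq_trans (cardU_le _ _) _; rewrite leq_add2r cardU_le.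
Qed.

Lemma FG2 : #|SG| <= #|Sg|.
Proof.
apply: leq_trans (leq_imset_card grp Sg); apply: subset_leq_card.
apply/subsetP => g; rewrite inE => /andP[gG /cards1P[C gC]].
have Cg : C \in g by rewrite gC inE.
apply/imsetP; exists C; last by rewrite (grp_def gG Cg).
by rewrite inE (G_sub gG Cg) (grp_def gG Cg) gC cards1.
Qed.

Lemma FG4 : #|HG| <= #|HC :&: Hi|.
Proof.
apply: leq_trans (leq_imset_card grp (HC :&: Hi)); apply: subset_leq_card.
apply/subsetP => g; rewrite inE => /andP[gG /andP[n1 /existsP[C /andP[Cg dC]]]].
have CP := G_sub gG Cg.
apply/imsetP; exists C; last by rewrite (grp_def gG Cg).
have hg : isHigh g by apply/existsP; exists C; rewrite Cg.
by rewrite !inE CP (grp_def gG Cg) n1 hg dC.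
Qed.

Lemma FG3 : 2 * #|PG| <= #|PrC|.
Proof.
have PGG : PG \subset G by apply/subsetP => g; rewrite inE => /andP[].
have tri := trivIsetS PGG Gtriv.
have cov : cover PG \subset PrC.
  apply/subsetP => C /bigcupP[g]; rewrite inE => /andP[gG /andP[n1 nh]] Cg.
  by rewrite inE (G_sub gG Cg) (grp_def gG Cg) n1 nh.
apply: leq_trans (subset_leq_card cov).
rewrite -[#|cover PG|]sum1_card big_trivIset // mulnC -sum_nat_const.
apply: leq_sum => g; rewrite inE => /andP[gG /andP[n1 _]]; rewrite sum1_card.
have : g != set0 by apply: contraNneq G0 => <-.
by rewrite -card_gt0; move: n1; case: #|g| => [|[|n]].
Qed.


Lemma pg_pair g : g \in PG -> exists A B,
  [/\ g = [set A; B], A != B, A \in PrC, B \in PrC & cadj e A B].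
Proof.
rewrite inE => /andP[gG /andP[n1 nh]].
have inPr D : D \in g -> D \in PrC.
  by move=> Dg; rewrite inE (G_sub gG Dg) (grp_def gG Dg) n1 nh.
case: (Gvalid gG) => [/eqP|[[A [B [gAB [AB [cAB [dA dB]]]]]]|[c [cg [dc _]]]]].
- by rewrite (negbTE n1).
- by exists A, B; split => //; apply: inPr; rewrite gAB !inE eqxx ?orbT.
- by move: nh; rewrite /isHigh negb_exists => /forallP /(_ c); rewrite cg /= dc.
Qed.

Lemma PrC_grp D : D \in PrC -> grp D \in PG.
Proof.
by rewrite !inE => /andP[DP /andP[n1 nh]]; rewrite grpG // n1 nh.
Qed.

Lemma PrC_in_grp D g : g \in PG -> D \in g -> D \in PrC.
Proof.
rewrite inE => /andP[gG /andP[n1 nh]] Dg.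
by rewrite inE (G_sub gG Dg) (grp_def gG Dg) n1 nh.
Qed.

Lemma PrC_deg D : D \in PrC -> deg D <= 2.
Proof. by case/pr_facts => /andP[]. Qed.

Definition nbr C := odflt C [pick D in nb C].

Lemma nbr_in C D : D \in nb C -> nbr C \in nb C.
Proof. by rewrite /nbr; case: pickP => [D' ->|/(_ D) ->]. Qed.

Lemma nbr_uniq C D : deg C = 1 -> D \in nb C -> D = nbr C.
Proof.
move=> d1 DnC; have : #|nb C| <= 1 by rewrite -d1 nb_card.
by move/card_le1_eqP; apply => //; apply: nbr_in DnC.
Qed.

Lemma three_nb C D1 D2 D3 : D1 \in nb C -> D2 \in nb C -> D3 \in nb C ->
  D1 != D2 -> D1 != D3 -> D2 != D3 -> 3 <= deg C.
Proof.
move=> H1 H2 H3 n12 n13 n23; apply: leq_trans (nb_card C).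
have : D1 |: [set D2; D3] \subset nb C by rewrite !subUset !sub1set H1 H2 H3.
move/subset_leq_card; rewrite cardsU1 cards2 n23 !inE negb_or n12 n13.
by [].
Qed.

Lemma Lm_nbr C : C \in PrC :&: Lf -> grp (nbr C) = grp C /\ nbr C \in PrC.
Proof.
case/setIP => CPr /setIdP[CP /eqP d1].
have [A [B [gAB AB APr BPr cAB]]] := pg_pair (PrC_grp CPr).
have Cg := grp_mem CP; have gG := grpG CP.
have AP := subsetP PrC_P _ APr; have BP := subsetP PrC_P _ BPr.
have Ag : A \in grp C by rewrite gAB !inE eqxx.
have Bg : B \in grp C by rewrite gAB !inE eqxx orbT.
have : C \in [set A; B] by rewrite -gAB.
case/set2P => CA.
  have BnC : B \in nb C by rewrite CA; apply: nb_cadj; rewrite // eq_sym.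
  by rewrite -(nbr_uniq d1 BnC) (grp_def gG Bg).
have AnC : A \in nb C by rewrite CA; apply: nb_cadj => //; rewrite cadj_sym.
by rewrite -(nbr_uniq d1 AnC) (grp_def gG Ag).
Qed.

Lemma Lu_nbr C : C \in Sg :&: Lf -> nbr C \in PrC.
Proof.
case/setIP => CS /setIdP[CP /eqP d1].
have [D DnC] := nb_ne CP; have := nbr_in DnC.
move=> H; have dC : deg C <= 2 by rewrite d1.
by case: (classify CS dC H) => [|[_]]; rewrite ?d1.
Qed.


Lemma X_facts C : C \in (PrC :&: Lf) :|: (Sg :&: Lf) ->
  [/\ C \in P, deg C = 1, nbr C \in PrC & (C \in PrC -> grp (nbr C) = grp C)].
Proof.
case/setUP => H.
  have [g1 g2] := Lm_nbr H; move: H => /setIP[CPr /setIdP[CP /eqP d1]]; by split.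
have g2 := Lu_nbr H; move: H => /setIP[CS /setIdP[CP /eqP d1]]; split => //.
by move=> CPr; move: CS CPr; rewrite !inE => /andP[_ ->] /andP[_ /andP[]].
Qed.

Lemma nbr_nb C : C \in P -> nbr C \in nb C.
Proof. by move=> CP; have [D DnC] := nb_ne CP; apply: nbr_in DnC. Qed.

Lemma PG_G : PG \subset G. Proof. by apply/subsetP => g; rewrite inE => /andP[]. Qed.

Lemma F16_inj C1 C2 : C1 \in (PrC :&: Lf) :|: (Sg :&: Lf) ->
  C2 \in (PrC :&: Lf) :|: (Sg :&: Lf) -> C1 != C2 ->
  grp (nbr C1) = grp (nbr C2) -> #|Hi| = 0.
Proof.
move=> X1 X2 C12 gg.
have [C1P d1 n1Pr g1] := X_facts X1; have [C2P d2 n2Pr g2] := X_facts X2.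
set g := grp (nbr C1).
have gPG : g \in PG by apply: PrC_grp.
have [A [B [gAB AB APr BPr cAB]]] := pg_pair gPG.
pose S := g :|: [set C1; C2].
have gS : g \subset S by apply: subsetUl.
have C1S : C1 \in S by rewrite !inE eqxx orbT.
have C2S : C2 \in S by rewrite !inE eqxx !orbT.
have n1g : nbr C1 \in g by apply: grp_mem; apply: (subsetP PrC_P).
have n2g : nbr C2 \in g by rewrite /g gg; apply: grp_mem; apply: (subsetP PrC_P).
have gP : g \subset P by apply/subsetP => W; apply: G_sub; apply: (subsetP PG_G).
have key Za Zb : g = [set Za; Zb] -> Za != Zb -> cadj e Za Zb -> nb Za \subset S.
  move=> gZ Zab cZ; apply/subsetP => D DnZ; apply/negPn/negP => DS.
  have Zag : Za \in g by rewrite gZ !inE eqxx.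
  have Zbg : Zb \in g by rewrite gZ !inE eqxx orbT.
  have ZaP := subsetP gP _ Zag; have ZbP := subsetP gP _ Zbg.
  have dZa := PrC_deg (PrC_in_grp gPG Zag); have dZb := PrC_deg (PrC_in_grp gPG Zbg).
  have ZbnZa : Zb \in nb Za by apply: nb_cadj; rewrite // eq_sym.
  have ZanZb := nb_sym ZaP ZbnZa.
  have DZb : D != Zb by apply: contraNneq DS => ->; apply: (subsetP gS).
  have dZa2 := two_nb DnZ ZbnZa DZb.
  have memg W : W \in g -> W = Za \/ W = Zb by rewrite gZ => /set2P.
  have hC (Cx : {set T}) : Cx \in P -> deg Cx = 1 -> nbr Cx \in g -> Cx \in S ->
      Cx = Zb \/ (Cx \notin g /\ Cx \in nb Zb).
    move=> CxP dCx nCx CxS; case: (boolP (Cx \in g)) => Cxg.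
      case: (memg _ Cxg) => [CxZa|]; last by left.
      by move: dZa2; rewrite -CxZa dCx.
    right; split => //.
    have CxnN := nb_sym CxP (nbr_nb CxP).
    case: (memg _ nCx) => [nZa|nZb]; last by rewrite -nZb.
    exfalso; rewrite nZa in CxnN.
    have ZD : Zb != D by rewrite eq_sym.
    have ZCx : Zb != Cx by apply: contraNneq Cxg => <-.
    have DCx : D != Cx by apply: contraNneq DS => ->.
    by move: (three_nb ZbnZa DnZ CxnN ZD ZCx DCx); rewrite leqNgt ltnS dZa.
  case: (hC _ C1P d1 n1g C1S) => [E1|[C1g C1n]];
    case: (hC _ C2P d2 n2g C2S) => [E2|[C2g C2n]].
  - by move: C12; rewrite E1 E2 eqxx.
  - have ZC2 : Za != C2 by apply: contraNneq C2g => <-.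
    by move: (two_nb ZanZb C2n ZC2); rewrite -E1 d1.
  - have ZC1 : Za != C1 by apply: contraNneq C1g => <-.
    by move: (two_nb ZanZb C1n ZC1); rewrite -E2 d2.
  - have ZC1 : Za != C1 by apply: contraNneq C1g => <-.
    have ZC2 : Za != C2 by apply: contraNneq C2g => <-.
    by move: (three_nb ZanZb C1n C2n ZC1 ZC2 C12); rewrite leqNgt ltnS dZb.
have SP : S \subset P by rewrite subUset gP subUset !sub1set C1P C2P.
have cl Z : Z \in S -> nb Z \subset S.
  case/setUP => [Zg|/set2P[]->].
  - have : Z \in [set A; B] by rewrite -gAB.
    case/set2P => ->; first exact: key gAB AB cAB.
    by apply: key; [rewrite gAB setUC | rewrite eq_sym | rewrite cadj_sym].
  - apply/subsetP => D DnC; rewrite (nbr_uniq d1 DnC); exact: (subsetP gS).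
  - apply/subsetP => D DnC; rewrite (nbr_uniq d2 DnC); exact: (subsetP gS).
have PS := closure SP C1S cl.
apply/eqP; rewrite cards_eq0; apply/eqP/setP => H; rewrite inE [RHS]inE.
apply/negbTE/negP => /andP[HP dH]; have := subsetP PS _ HP.
case/setUP => [Hg|/set2P[] HC].
- by move: dH; rewrite leqNgt ltnS PrC_deg // (PrC_in_grp gPG Hg).
- by rewrite HC d1 in dH.
- by rewrite HC d2 in dH.
Qed.


Lemma F16 : 0 < #|Hi| -> #|PrC :&: Lf| + #|Sg :&: Lf| <= #|PG|.
Proof.
move=> Hi0.
rewrite -cardU_disj; last by djt.
set X := _ :|: _.
have inj : {in X &, injective (fun C => grp (nbr C))}.
  move=> C1 C2 X1 X2 eq; apply/eqP; apply/negPn/negP => ne.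
  by have := F16_inj X1 X2 ne eq; move: Hi0 => /[swap] ->.
rewrite -(card_in_imset inj); apply: subset_leq_card; apply/subsetP => _ /imsetP[C CX ->].
by have [_ _ nPr _] := X_facts CX; apply: PrC_grp.
Qed.

Lemma main_count : 6 * #|G| <= 5 * #|P|.
Proof.
have [f8a f8b f8c] := F8; have [f9a f9b] := F9; have [f14a f14b] := F14.
apply: (arith F1 F2 F3 F4 F5 EPP F7 f8a f8b f8c f9a f9b _ F11 F12 F13 _ f14b F15 F16 P2 FG1 FG2 FG3 FG4).
- by rewrite -(E_sym PrC) -(E_sym PrC); exact: F10.
- by rewrite (E_sym (Sg :&: Tw)) (E_sym (HC :&: Lf)); exact: f14a.
Qed.

End Main.


Theorem lemmaB17 (T : finType) (e : rel T) (h : nat) (L : nat -> {set {set T}}) :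
  is_tree e -> ufo_tree e h L ->
  forall l, 0 < l <= h -> 6 * #|L l| <= 5 * #|L l.-1|.
Proof.
move=> [esym [_ [econn eacyc]]] [_ [_ [Hcl Hstep]]] l /andP[l0 lh].
have il : l.-1 < h by case: l l0 lh.
have [P2 [G [Gpart [Gvalid [Gabs [Gmax HQ]]]]]] := Hstep _ il.
have [Ppart Pconn] := Hcl _ (ltnW il).
have e1 : l.-1.+1 = l by rewrite prednK.
rewrite e1 in HQ; rewrite HQ.
apply: leq_trans (_ : 6 * #|G| <= _).
  by rewrite leq_mul2l leq_imset_card.
exact: (main_count esym eacyc econn Ppart Pconn P2 Gpart Gvalid Gabs Gmax).
Qed.
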